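(* Let $\delta\in[\frac{\sqrt2}{2},1)$ and $p\in(0,1)$. If $\delta\le 1-(6-4\sqrt2)p$, then $$(1+\delta)2^{\frac p2-1}\Big(\frac{g(p)}{1-\delta}\Big)^{p/2}<1,$$ where $g(p)=\frac{p}{2}(1-\frac{p}{2})^{\frac{2}{p}-1}$. *)

(* Defs.v *)
From Stdlib Require Import Reals.
Open Scope R_scope.

(* g(p) = p/2 * (1 - p/2)^(2/p - 1), real exponent via Rpower (base > 0 for p in (0,1)). *)
Definition g (p : R) : R := (p / 2) * Rpower (1 - p / 2) (2 / p - 1).

(* Main.v *)
Require Import Defs.
From Stdlib Require Import Reals Lra.
From Coquelicot Require Import Coquelicot.
Open Scope R_scope.

Definition cc := 12 - 8 * sqrt 2.
Definition hh (t : R) := ln (2 - cc * t) - t * ln cc + (t - 1) * ln 2 + (1 - t) * ln (1 - t).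
Definition hd (t : R) := - cc / (2 - cc * t) - ln cc + ln 2 - ln (1 - t) - 1.

Lemma sqrt2_b : 1.41 < sqrt 2 < 1.42.
Proof.
  pose proof (sqrt_sqrt 2 ltac:(lra)) as h2. pose proof (sqrt_pos 2) as h0. split; nra.
Qed.

Lemma cc_b : 0.64 < cc < 0.72.
Proof. pose proof sqrt2_b. unfold cc. lra. Qed.

Lemma hh_der t : 0 <= t <= 1/2 -> derivable_pt_lim hh t (hd t).
Proof.
  intros Ht. pose proof cc_b as Hc. apply is_derive_Reals. unfold hh, hd.
  auto_derive.
  - repeat split; nra.
  - unfold Rminus, Rdiv. field. split; nra.
Qed.

Lemma hh0 : hh 0 = 0.
Proof. unfold hh. replace (1-0) with 1 by ring. rewrite ln_1. replace (2 - cc*0) with 2 by ring. ring. Qed.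

Lemma hh_half : hh (1/2) = 0.
Proof.
  pose proof sqrt2_b as Hs. pose proof (sqrt_sqrt 2 ltac:(lra)) as h2.
  pose proof cc_b as Hc.
  unfold hh.
  assert (E1 : (2 - cc * (1/2)) * (2 - cc * (1/2)) = (2*2) * cc) by (unfold cc; nra).
  pose proof (f_equal ln E1) as L.
  rewrite !ln_mult in L; try nra.
  replace (1 - 1/2) with (/2) by field. rewrite ln_Rinv; lra.
Qed.

Lemma hd_incr a b : 0 <= a -> a < b -> b <= 1/2 -> hd a < hd b.
Proof.
  intros Ha Hab Hb. pose proof cc_b as Hc. unfold hd.
  assert (L : ln ((1-b)/(1-a)) <= (1-b)/(1-a) - 1).
  { pose proof (exp_ineq1_le (ln ((1-b)/(1-a)))) as X. rewrite exp_ln in X. lra.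
    apply Rdiv_lt_0_compat; lra. }
  rewrite ln_div in L; try lra.
  assert (Q : (1-b)/(1-a) - 1 <= -(b-a)).
  { apply (Rmult_le_reg_r (1-a)). lra. replace (((1-b)/(1-a) - 1)*(1-a)) with (a-b) by (field; lra). nra. }
  assert (Pb : 2 - cc*b > 1.6) by nra.
  assert (Pa : 2 - cc*a > 1.6) by nra.
  assert (K : cc/(2-cc*b) - cc/(2-cc*a) < b - a).
  { replace (cc/(2-cc*b) - cc/(2-cc*a)) with (cc*cc*(b-a)/((2-cc*b)*(2-cc*a))).
    2:{ field. split; lra. }
    assert (Pab : 0 < (2-cc*b)*(2-cc*a)) by (apply Rmult_lt_0_compat; lra).
    apply (Rmult_lt_reg_r ((2-cc*b)*(2-cc*a))). exact Pab.
    replace (cc*cc*(b-a)/((2-cc*b)*(2-cc*a)) * ((2-cc*b)*(2-cc*a))) with (cc*cc*(b-a)) by (field; lra).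
    assert (cc*cc < (2-cc*b)*(2-cc*a)) by nra. nra. }
  unfold Rdiv in *. lra.
Qed.

Lemma hh_neg t : 0 < t < 1/2 -> hh t < 0.
Proof.
  intros Ht. apply Rnot_le_lt. intro H.
  destruct (MVT_cor2 hh hd 0 t ltac:(lra)) as [a [Ea Ha]].
  { intros x Hx. apply hh_der. lra. }
  destruct (MVT_cor2 hh hd t (1/2) ltac:(lra)) as [b [Eb Hb]].
  { intros x Hx. apply hh_der. lra. }
  rewrite hh0 in Ea. rewrite hh_half in Eb.
  pose proof (hd_incr a b ltac:(lra) ltac:(lra) ltac:(lra)) as Hlt.
  assert (A : 0 <= hd a) by nra.
  assert (B : hd b <= 0) by nra.
  lra.
Qed.

Theorem lemma2 (delta p : R) :
  sqrt 2 / 2 <= delta -> delta < 1 ->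
  0 < p -> p < 1 ->
  delta <= 1 - (6 - 4 * sqrt 2) * p ->
  (1 + delta) * Rpower 2 (p / 2 - 1) * Rpower (g p / (1 - delta)) (p / 2) < 1.
Proof.
  intros H1 H2 H3 H4 H5.
  pose proof sqrt2_b as Hs. pose proof cc_b as Hc.
  set (t := p / 2).
  assert (Ht : 0 < t < 1/2) by (unfold t; lra).
  set (eps := 1 - delta).
  assert (He : cc * t <= eps) by (unfold eps, t, cc; lra).
  assert (Hep : 0 < eps) by (unfold eps; lra).
  assert (Hct : 0 < cc * t) by nra.
  assert (Hgp : 0 < g p).
  { unfold g, Rpower. apply Rmult_lt_0_compat. lra. apply exp_pos. }
  assert (Lg : ln (g p) = ln t + (2/p - 1) * ln (1 - t)).
  { unfold g, Rpower. fold t. rewrite ln_mult; try lra. rewrite ln_exp. reflexivity. apply exp_pos. }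
  assert (E : (1 + delta) * Rpower 2 (t - 1) * Rpower (g p / eps) t
     = exp (ln (2 - eps) + (t - 1) * ln 2 + t * (ln t + (2/p - 1) * ln (1 - t) - ln eps))).
  { unfold Rpower. fold t eps. rewrite !exp_plus. rewrite exp_ln by (unfold eps; lra).
    rewrite ln_div by lra. rewrite Lg. unfold eps. replace (2 - (1 - delta)) with (1 + delta) by ring.
    ring. }
  rewrite E. apply Rlt_le_trans with (exp 0); [apply exp_increasing | rewrite exp_0; lra].
  assert (A1 : ln (2 - eps) <= ln (2 - cc * t)) by (assert (eps < 1) by (unfold eps; lra); apply ln_le; lra).
  assert (A2 : ln (cc * t) <= ln eps) by (apply ln_le; lra).
  rewrite ln_mult in A2 by lra.
  assert (A3 : t * (ln cc + ln t) <= t * ln eps) by (apply Rmult_le_compat_l; lra).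
  assert (A4 : t * (2 / p - 1) = 1 - t) by (unfold t; field; lra).
  pose proof (hh_neg t Ht) as Hn. unfold hh in Hn.
  assert (A5 : t * (ln t + (2/p - 1) * ln (1 - t) - ln eps)
     = t * ln t + (t * (2/p - 1)) * ln (1 - t) - t * ln eps) by ring.
  rewrite A4 in A5. lra.
Qed.
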